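(* Let $l\in\mathbb N_0$. The following are equivalent: (i) $J^0(l,0;u)\ge0$ for all $u\in\mathscr U_{ad}$; (ii) $u\mapsto J(l,\xi;u)$ is convex for some initial state $\xi$; (iii) $u\mapsto J(l,\xi;u)$ is convex for every initial state $\xi$; (iv) $u\mapsto J^0(l,\xi;u)$ is convex for some $\xi$; (v) $u\mapsto J^0(l,\xi;u)$ is convex for every $\xi$; (vi) $\mathcal M\ge0$.
   Context: Fix integers $N\ge1$, $n,m\ge1$, $\mathbb N_0=\{0,\dots,N-1\}$. On a complete probability space, for initial time $l\in\mathbb N_0$, let $\omega_l,\dots,\omega_{N-1}$ be real random variables and $\xi$ a square-integrable $\mathbb R^n$-valued initial state independent of them; $\mathfrak F_k=\sigma\{\xi,\omega_l,\dots,\omega_k\}$, $\mathbb E[\omega_{k+1}|\mathfrak F_k]=0$, $\mathbb E[\omega_{k+1}^2|\mathfrak F_k]=1$. $\mathscr U_{ad}$: sequences $u=(u_l,\dots,u_{N-1})$, $u_k$ $\mathfrak F_k$-measurable in $\mathbb R^m$, $\mathbb E\sum|u_k|^2<\infty$, a Hilbert space with inner product $\langle u,v\rangle=\mathbb E\sum_k\langle u_k,v_k\rangle$. State: $x_{k+1}=A_kx_k+\bar A_k\mathbb Ex_k+B_ku_k+\bar B_k\mathbb Eu_k+b_k+(C_kx_k+\bar C_k\mathbb Ex_k+D_ku_k+\bar D_k\mathbb Eu_k+\sigma_k)\omega_k$, $x_l=\xi$. Cost: $J(l,\xi;u)=\mathbb E\{\langle Gx_N,x_N\rangle+2\langle g,x_N\rangle+\langle\bar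 G\mathbb Ex_N,\mathbb Ex_N\rangle+2\langle\bar g,\mathbb Ex_N\rangle+\sum_{k=l}^{N-1}[\langle Q_kx_k,x_k\rangle+2\langle S_ku_k,x_k\rangle+\langle R_ku_k,u_k\rangle+2\langle q_k,x_k\rangle+2\langle\rho_k,u_k\rangle+\langle\bar Q_k\mathbb Ex_k,\mathbb Ex_k\rangle+2\langle\bar S_k\mathbb Eu_k,\mathbb Ex_k\rangle+\langle\bar R_k\mathbb Eu_k,\mathbb Eu_k\rangle+2\langle\bar q_k,\mathbb Ex_k\rangle+2\langle\bar\rho_k,\mathbb Eu_k\rangle]\}$, deterministic $A_k,\bar A_k,C_k,\bar C_k,Q_k,\bar Q_k,G,\bar G\in\mathbb R^{n\times n}$, $B_k,\bar B_k,D_k,\bar D_k,S_k,\bar S_k\in\mathbb R^{n\times m}$, $R_k,\bar R_k\in\mathbb R^{m\times m}$ ($Q,\bar Q,R,\bar R,G,\bar G$ symmetric), deterministic $b_k,\sigma_k$, square-integrable random $g,\bar g$, adapted $q,\bar q,\rho,\bar\rho$. $J^0$ is $J$ with $b,\sigma,g,\bar g,q,\bar q,\rho,\bar\rho$ zero. $\mathcal M$ denotes the bounded self-adjoint linear operator on $\mathscr U_{ad}$ with $J^0(l,0;u)=\langle\mathcal Mu,u\rangle$ for all $u\in\mathscr U_{ad}$. *)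

(* Defs.v *)
From HB Require Import structures.
From mathcomp Require Import all_boot all_order all_algebra.
From mathcomp Require Import all_classical all_reals all_analysis.
Set Implicit Arguments. Unset Strict Implicit. Unset Printing Implicit Defensive.
Import Order.TTheory GRing.Theory Num.Theory.
Local Open Scope classical_set_scope.
Local Open Scope ring_scope.

(** Deterministic and random data of the mean-field LQ problem.
    Vectors of R^k are column vectors 'cV[R]_k; time-indexed coefficients
    are functions of k : nat (only k < N matters). *)
Record lqdata (R : realType) (T : Type) (n m : nat) := LQData {
  cA : nat -> 'M[R]_n;  cAb : nat -> 'M[R]_n;
  cB : nat -> 'M[R]_(n, m); cBb : nat -> 'M[R]_(n, m);
  cC : nat -> 'M[R]_n;  cCb : nat -> 'M[R]_n;
  cD : nat -> 'M[R]_(n, m); cDb : nat -> 'M[R]_(n, m);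
  cb : nat -> 'cV[R]_n; csig : nat -> 'cV[R]_n;
  cQ : nat -> 'M[R]_n;  cQb : nat -> 'M[R]_n;
  cS : nat -> 'M[R]_(n, m); cSb : nat -> 'M[R]_(n, m);
  cR : nat -> 'M[R]_m;  cRb : nat -> 'M[R]_m;
  cG : 'M[R]_n; cGb : 'M[R]_n;
  cg : T -> 'cV[R]_n; cgb : T -> 'cV[R]_n;
  cq : nat -> T -> 'cV[R]_n; cqb : nat -> T -> 'cV[R]_n;
  crho : nat -> T -> 'cV[R]_m; crhob : nat -> T -> 'cV[R]_m }.

Definition homog (R : realType) (T : Type) (n m : nat) (D : lqdata R T n m) :=
  @LQData R T n m (cA D) (cAb D) (cB D) (cBb D) (cC D) (cCb D) (cD D) (cDb D)
    (fun _ => 0) (fun _ => 0)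
    (cQ D) (cQb D) (cS D) (cSb D) (cR D) (cRb D) (cG D) (cGb D)
    (fun _ => 0) (fun _ => 0) (fun _ _ => 0) (fun _ _ => 0) (fun _ _ => 0) (fun _ _ => 0).

Definition dot (R : realType) (k : nat) (a b : 'cV[R]_k) : R := (a^T *m b) 0 0.

Section S.
Context (R : realType) (d : measure_display) (T : measurableType d) (P : probability T R).

(** Expectation of a real random variable (meaningful for integrable ones). *)
Definition Ex (f : T -> R) : R := fine (\int[P]_(t in setT) (f t)%:E)%E.
Definition Ev (k : nat) (X : T -> 'cV[R]_k) : 'cV[R]_k :=
  \col_(i < k) Ex (fun t => X t i 0).

Definition sqint (f : T -> R) : Prop :=
  measurable_fun setT f /\ P.-integrable setT (fun t => ((f t) ^+ 2)%:E).
Definition sqintv (k : nat) (X : T -> 'cV[R]_k) : Prop :=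
  forall i : 'I_k, sqint (fun t => X t i 0).

Definition Fmeas (F : set (set T)) (f : T -> R) : Prop :=
  forall B : set R, measurable B -> F (f @^-1` B).
Definition Fmeasv (k : nat) (F : set (set T)) (X : T -> 'cV[R]_k) : Prop :=
  forall i : 'I_k, Fmeas F (fun t => X t i 0).

Definition is_condexp (F : set (set T)) (X Y : T -> R) : Prop :=
  Fmeas F Y /\ P.-integrable setT (EFin \o X) /\ P.-integrable setT (EFin \o Y) /\
  forall A, F A -> (\int[P]_(t in A) (X t)%:E = \int[P]_(t in A) (Y t)%:E)%E.

Definition gen (n : nat) (xi : T -> 'cV[R]_n) (om : nat -> T -> R) (a b : nat)
  : set (set T) :=
  [set A | (exists (i : 'I_n) (B : set R), measurable B /\
              A = (fun t => xi t i 0) @^-1` B) \/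
           (exists (j : nat) (B : set R), (a <= j <= b)%N /\ measurable B /\
              A = om j @^-1` B)].
Definition filt (n : nat) (xi : T -> 'cV[R]_n) (om : nat -> T -> R) (l k : nat) :=
  <<s gen xi om l k >>.
(** sigma{xi} and sigma{omega_l, ..., omega_{N-1}} *)
Definition sig_vec (n : nat) (xi : T -> 'cV[R]_n) := <<s gen xi (fun _ _ => 0) 1 0 >>.
Definition sig_noise (om : nat -> T -> R) (l N : nat) :=
  <<s gen (fun _ => (0 : 'cV[R]_0)) om l N.-1 >>.

Definition indep (F1 F2 : set (set T)) : Prop :=
  forall A B, F1 A -> F2 B -> (P (A `&` B) = P A * P B)%E.

Definition init_state (n : nat) (om : nat -> T -> R) (l N : nat) (xi : T -> 'cV[R]_n) :=
  sqintv xi /\ indep (sig_vec xi) (sig_noise om l N).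

Section Problem.
Context (n m N l : nat) (om : nat -> T -> R) (D : lqdata R T n m).

Definition admissible (xi0 : T -> 'cV[R]_n) (u : nat -> T -> 'cV[R]_m) : Prop :=
  forall k, (l <= k < N)%N -> Fmeasv (filt xi0 om l k) (u k) /\ sqintv (u k).

Definition ipU (u v : nat -> T -> 'cV[R]_m) : R :=
  Ex (fun t => \sum_(l <= k < N) dot (u k t) (v k t)).

(** x_{l+j} *)
Fixpoint xs (xi : T -> 'cV[R]_n) (u : nat -> T -> 'cV[R]_m) (j : nat) : T -> 'cV[R]_n :=
  match j with
  | 0 => xi
  | j'.+1 =>
    let k := (l + j')%N in
    let x := xs xi u j' in
    let Exk := Ev x in
    let Euk := Ev (u k) in
    fun t => cA D k *m x t + cAb D k *m Exk + cB D k *m u k t + cBb D k *m Euk + cb D k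
      + om k t *: (cC D k *m x t + cCb D k *m Exk + cD D k *m u k t
                   + cDb D k *m Euk + csig D k)
  end.

Definition state xi u (k : nat) : T -> 'cV[R]_n := xs xi u (k - l).

Definition cost (xi : T -> 'cV[R]_n) (u : nat -> T -> 'cV[R]_m) : R :=
  let x := state xi u in
  Ex (fun t =>
    dot (cG D *m x N t) (x N t) + 2 * dot (cg D t) (x N t)
    + dot (cGb D *m Ev (x N)) (Ev (x N)) + 2 * dot (cgb D t) (Ev (x N))
    + \sum_(l <= k < N)
        ( dot (cQ D k *m x k t) (x k t) + 2 * dot (cS D k *m u k t) (x k t)
        + dot (cR D k *m u k t) (u k t) + 2 * dot (cq D k t) (x k t)
        + 2 * dot (crho D k t) (u k t)
        + dot (cQb D k *m Ev (x k)) (Ev (x k))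
        + 2 * dot (cSb D k *m Ev (u k)) (Ev (x k))
        + dot (cRb D k *m Ev (u k)) (Ev (u k))
        + 2 * dot (cqb D k t) (Ev (x k)) + 2 * dot (crhob D k t) (Ev (u k)))).

Definition wellposed (xi0 : T -> 'cV[R]_n) : Prop :=
  forall xi u, init_state om l N xi -> admissible xi0 u ->
    forall k, (l <= k <= N)%N -> sqintv (state xi u k).
End Problem.

Definition convex_on_U (m : nat) (adm : (nat -> T -> 'cV[R]_m) -> Prop)
    (f : (nat -> T -> 'cV[R]_m) -> R) : Prop :=
  forall u v, adm u -> adm v -> forall lam : R, 0 <= lam <= 1 ->
    f (fun k t => lam *: u k t + (1 - lam) *: v k t) <= lam * f u + (1 - lam) * f v.
End S.

(* Main.v *)
Require Import Defs.
From HB Require Import structures.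
From mathcomp Require Import all_boot all_order all_algebra.
From mathcomp Require Import all_classical all_reals all_analysis.
From mathcomp Require Import lra ring zify.
Import Order.TTheory GRing.Theory Num.Theory.
Local Open Scope classical_set_scope.
Local Open Scope ring_scope.

Set Implicit Arguments. Unset Strict Implicit. Unset Printing Implicit Defensive.


Section L.
Context (R : realType) (d : measure_display) (T : measurableType d) (P : probability T R).

Definition L1 (f : T -> R) := P.-integrable setT (EFin \o f).
Definition L2 (f : T -> R) := sqint P f.

Lemma L1_ext f g : (forall t, f t = g t) -> L1 f -> L1 g.
Proof. by move=> fg; apply: eq_integrable => // t _ /=; rewrite fg. Qed.

Lemma L2_ext f g : (forall t, f t = g t) -> L2 f -> L2 g.
Proof. by move=> fg; have -> : g = f by apply/funext=> t; rewrite fg. Qed.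

Lemma L1_meas f : L1 f -> measurable_fun setT f.
Proof. by move=> /integrableP[/measurable_realfun.measurable_EFinP]. Qed.

Lemma L1_cst c : L1 (fun _ => c).
Proof. exact: (finite_measure_integrable_cst P c measurableT). Qed.

Lemma L1_add f g : L1 f -> L1 g -> L1 (fun t => f t + g t).
Proof.
move=> hf hg; have := integrableD measurableT hf hg.
by apply: eq_integrable => // t _ /=; rewrite EFinD.
Qed.

Lemma L1_scale a f : L1 f -> L1 (fun t => a * f t).
Proof.
move=> hf; have := integrableZl measurableT a hf.
by apply: eq_integrable => // t _ /=; rewrite EFinM.
Qed.

Lemma L1_sum (I : Type) (s : seq I) (F : I -> T -> R) :
  (forall i, L1 (F i)) -> L1 (fun t => \sum_(i <- s) F i t).
Proof.
elim: s => [|i s IH] hF.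
  by apply: (L1_ext (f := fun _ => 0)) => [t|]; rewrite ?big_nil //; exact: L1_cst.
apply: (L1_ext (f := fun t => F i t + \sum_(j <- s) F j t)) => [t|].
  by rewrite big_cons.
by apply: L1_add => //; exact: IH.
Qed.

Lemma L2_meas f : L2 f -> measurable_fun setT f.
Proof. by case. Qed.

Lemma L2_cst c : L2 (fun _ => c).
Proof.
split; first exact: measurable_cst.
exact: (finite_measure_integrable_cst P (c ^+ 2) measurableT).
Qed.

Lemma L2_mul f g : L2 f -> L2 g -> L1 (fun t => f t * g t).
Proof.
move=> [mf if2] [mg ig2].
have hs := integrableD measurableT if2 ig2.
apply: (le_integrable measurableT _ _ hs).
  apply/measurable_realfun.measurable_EFinP.
  exact: measurable_realfun.measurable_funM.
move=> t _ /=.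
rewrite lee_fin normrM.
rewrite [X in _ <= X]ger0_norm. 2: by rewrite addr_ge0 // sqr_ge0.
rewrite -(real_normK (num_real (f t))) -(real_normK (num_real (g t))).
have := normr_ge0 (f t); have := normr_ge0 (g t).
set a := `|f t|; set b := `|g t|; move=> ha hb. nra.
Qed.

Lemma L2_L1 f : L2 f -> L1 f.
Proof.
move=> hf; apply: (L1_ext (f := fun t => f t * 1)) => [t|]; first by rewrite mulr1.
by apply: L2_mul => //; exact: L2_cst.
Qed.

Lemma L2_scale a f : L2 f -> L2 (fun t => a * f t).
Proof.
move=> [mf if2]; split.
  by apply: measurable_realfun.measurable_funM => //; exact: measurable_cst.
have := integrableZl measurableT (a ^+ 2) if2.
by apply: eq_integrable => // t _ /=; rewrite -EFinM exprMn.
Qed.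

Lemma L2_add f g : L2 f -> L2 g -> L2 (fun t => f t + g t).
Proof.
move=> [mf if2] [mg ig2]; split.
  exact: measurable_realfun.measurable_funD.
have hs := integrableD measurableT (integrableZl measurableT 2 if2)
                                   (integrableZl measurableT 2 ig2).
apply: (le_integrable measurableT _ _ hs).
  apply/measurable_realfun.measurable_EFinP.
  apply: measurable_realfun.measurable_funX.
  exact: measurable_realfun.measurable_funD.
move=> t _ /=; rewrite lee_fin.
rewrite [X in _ <= X]ger0_norm ?ger0_norm ?sqr_ge0 //; last by rewrite addr_ge0 // mulr_ge0 // sqr_ge0.

set a := f t; set b := g t. have := sqr_ge0 (a - b). nra.
Qed.

Lemma L2_sum (I : Type) (s : seq I) (F : I -> T -> R) :
  (forall i, L2 (F i)) -> L2 (fun t => \sum_(i <- s) F i t).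
Proof.
elim: s => [|i s IH] hF.
  by apply: (L2_ext (f := fun _ => 0)) => [t|]; rewrite ?big_nil //; exact: L2_cst.
apply: (L2_ext (f := fun t => F i t + \sum_(j <- s) F j t)) => [t|].
  by rewrite big_cons.
by apply: L2_add => //; exact: IH.
Qed.

Lemma Ex_lin a b f g : L1 f -> L1 g ->
  Ex P (fun t => a * f t + b * g t) = a * Ex P f + b * Ex P g.
Proof.
move=> hf hg.
rewrite /Ex -[fine _]/(Rintegral P setT _) RintegralD //; last 2 first.
- exact: L1_scale.
- exact: L1_scale.
by rewrite !RintegralZl.
Qed.

Lemma L1_summ (I : eqType) (s : seq I) (F : I -> T -> R) :
  (forall i, i \in s -> L1 (F i)) -> L1 (fun t => \sum_(i <- s) F i t).
Proof.
elim: s => [|i s IH] hF.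
  by apply: (L1_ext (f := fun _ => 0)) => [t|]; rewrite ?big_nil //; exact: L1_cst.
apply: (L1_ext (f := fun t => F i t + \sum_(j <- s) F j t)) => [t|].
  by rewrite big_cons.
apply: L1_add; first by apply: hF; rewrite inE eqxx.
by apply: IH => j js; apply: hF; rewrite inE js orbT.
Qed.

Lemma Ex_lin3 a b c f g h : L1 f -> L1 g -> L1 h ->
  Ex P (fun t => a * f t + b * g t + c * h t) = a * Ex P f + b * Ex P g + c * Ex P h.
Proof.
move=> hf hg hh.
rewrite /Ex -[fine _]/(Rintegral P setT _) RintegralD //; last 2 first.
- by apply: L1_add; exact: L1_scale.
- exact: L1_scale.
rewrite RintegralD //; try exact: L1_scale.
by rewrite !RintegralZl.
Qed.

End L.


Section V.
Context (R : realType) (d : measure_display) (T : measurableType d) (P : probability T R).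

Lemma Fmeas_sub (G : set (set T)) (f g : T -> R) :
  Fmeas <<s G >> f -> Fmeas <<s G >> g -> Fmeas <<s G >> (fun t => f t - g t).
Proof.
move=> hf hg B mB.
have mf : measurable_fun (setT : set (g_sigma_algebraType G)) f.
  by move=> _ Y mY; rewrite setTI; exact: hf.
have mg : measurable_fun (setT : set (g_sigma_algebraType G)) g.
  by move=> _ Y mY; rewrite setTI; exact: hg.
have := measurable_realfun.measurable_funB mf mg measurableT mB.
by rewrite setTI.
Qed.

Lemma Fmeas_cst (G : set (set T)) (c : R) : Fmeas <<s G >> (fun _ => c).
Proof.
move=> B mB.
have := @measurable_cst _ _ (g_sigma_algebraType G) _ setT c measurableT B mB.
by rewrite setTI.
Qed.

Definition L2v k (X : T -> 'cV[R]_k) := sqintv P X.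

Lemma L2v_cst k (c : 'cV[R]_k) : L2v (fun _ => c).
Proof. by move=> i; exact: L2_cst. Qed.

Lemma L2v_lin k a b (X Y : T -> 'cV[R]_k) : L2v X -> L2v Y ->
  L2v (fun t => a *: X t + b *: Y t).
Proof.
move=> hX hY i.
apply: (@L2_ext _ _ _ P (fun t => a * X t i 0 + b * Y t i 0)) => [t|].
  by rewrite !mxE.
by apply: L2_add; apply: L2_scale; [exact: hX | exact: hY].
Qed.

Lemma L2v_mul k p (A : 'M[R]_(p, k)) (X : T -> 'cV[R]_k) : L2v X ->
  L2v (fun t => A *m X t).
Proof.
move=> hX i.
apply: (@L2_ext _ _ _ P (fun t => \sum_(j < k) A i j * X t j 0)) => [t|].
  by rewrite !mxE.
by apply: L2_sum => j; apply: L2_scale; exact: hX.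
Qed.

Lemma dot_L1 k (X Y : T -> 'cV[R]_k) : L2v X -> L2v Y ->
  L1 P (fun t => dot (X t) (Y t)).
Proof.
move=> hX hY.
apply: (@L1_ext _ _ _ P (fun t => \sum_(j < k) X t j 0 * Y t j 0)) => [t|].
  by rewrite /dot !mxE; apply: eq_bigr => j _; rewrite !mxE.
by apply: L1_sum => j; apply: L2_mul; [exact: hX | exact: hY].
Qed.

Lemma Ev_lin k a b (X Y : T -> 'cV[R]_k) : L2v X -> L2v Y ->
  Ev P (fun t => a *: X t + b *: Y t) = a *: Ev P X + b *: Ev P Y.
Proof.
move=> hX hY; apply/matrixP => i j; rewrite !mxE.
rewrite -(Ex_lin a b (L2_L1 (hX i)) (L2_L1 (hY i))).
by congr Ex; apply/funext => t; rewrite !mxE.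
Qed.

End V.


Section A.
Context (R : realType) (lam : R).

Definition Aff (V : lmodType R) (w u v dd : V) :=
  w = lam *: u + (1 - lam) *: v /\ dd = u - v.

Lemma Aff_cst (V : lmodType R) (c : V) : Aff c c c 0.
Proof. by split; rewrite ?subrr // -scalerDl addrC subrK scale1r. Qed.

Lemma Aff_add (V : lmodType R) (w1 u1 v1 d1 w2 u2 v2 d2 : V) :
  Aff w1 u1 v1 d1 -> Aff w2 u2 v2 d2 -> Aff (w1 + w2) (u1 + u2) (v1 + v2) (d1 + d2).
Proof.
move=> [-> ->] [-> ->]; split.
  by rewrite !scalerDr addrACA.
by rewrite opprD addrACA.
Qed.

Lemma Aff_scale (V : lmodType R) c (w u v dd : V) :
  Aff w u v dd -> Aff (c *: w) (c *: u) (c *: v) (c *: dd).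
Proof.
move=> [-> ->]; split; first by rewrite scalerDr !scalerA mulrC (mulrC c).
by rewrite scalerBr.
Qed.

Lemma Aff_mul p k (A : 'M[R]_(p, k)) (w u v dd : 'cV[R]_k) :
  Aff w u v dd -> Aff (A *m w) (A *m u) (A *m v) (A *m dd).
Proof.
move=> [-> ->]; split; first by rewrite mulmxDr !scalemxAr.
by rewrite mulmxBr.
Qed.

Definition QA (w u v dd : R) := w = lam * u + (1 - lam) * v - lam * (1 - lam) * dd.

Lemma QA_add w1 u1 v1 d1 w2 u2 v2 d2 :
  QA w1 u1 v1 d1 -> QA w2 u2 v2 d2 -> QA (w1 + w2) (u1 + u2) (v1 + v2) (d1 + d2).
Proof. rewrite /QA => -> ->; ring. Qed.

Lemma QA_scale c w u v dd : QA w u v dd -> QA (c * w) (c * u) (c * v) (c * dd).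
Proof. rewrite /QA => ->; ring. Qed.

Lemma QA_sum (I : eqType) (s : seq I) (W U V DD : I -> R) :
  (forall i, i \in s -> QA (W i) (U i) (V i) (DD i)) ->
  QA (\sum_(i <- s) W i) (\sum_(i <- s) U i) (\sum_(i <- s) V i) (\sum_(i <- s) DD i).
Proof.
elim: s => [|i s IH] h; first by rewrite /QA !big_nil; ring.
rewrite !big_cons; apply: QA_add; first by apply: h; rewrite inE eqxx.
by apply: IH => j js; apply: h; rewrite inE js orbT.
Qed.

Lemma dotE k (a b : 'cV[R]_k) : dot a b = \sum_(i < k) a i 0 * b i 0.
Proof. by rewrite /dot !mxE; apply: eq_bigr => i _; rewrite !mxE. Qed.

Lemma QA_dot k (aw au av ad bw bu bv bd : 'cV[R]_k) :
  Aff aw au av ad -> Aff bw bu bv bd ->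
  QA (dot aw bw) (dot au bu) (dot av bv) (dot ad bd).
Proof.
move=> [-> ->] [-> ->]; rewrite /QA !dotE !mulr_sumr -sumrN -!big_split /=.
by apply: eq_bigr => i _; rewrite !mxE; ring.
Qed.

End A.


Section S4.
Context (R : realType) (d : measure_display) (T : measurableType d) (P : probability T R).
Context (lam : R).

Lemma Aff_Ev k (W U V DD : T -> 'cV[R]_k) :
  (forall t, Aff lam (W t) (U t) (V t) (DD t)) -> L2v P U -> L2v P V ->
  Aff lam (Ev P W) (Ev P U) (Ev P V) (Ev P DD).
Proof.
move=> h hU hV.
have -> : W = fun t => lam *: U t + (1 - lam) *: V t.
  by apply/funext => t; case: (h t).
have -> : DD = fun t => 1 *: U t + (-1) *: V t.
  by apply/funext => t; case: (h t) => _ ->; rewrite scale1r scaleN1r.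
by rewrite !Ev_lin //; split; rewrite // scale1r scaleN1r.
Qed.

Context (n m N l : nat) (om : nat -> T -> R) (E : lqdata R T n m).
Context (xi : T -> 'cV[R]_n) (u v : nat -> T -> 'cV[R]_m).

Definition wc := fun k t => lam *: u k t + (1 - lam) *: v k t.
Definition dc := fun k t => u k t - v k t.

Lemma xs_aff
  (hu : forall j, (j <= N - l)%N -> L2v P (xs P l om E xi u j))
  (hv : forall j, (j <= N - l)%N -> L2v P (xs P l om E xi v j))
  (hcu : forall j, (j < N - l)%N -> L2v P (u (l + j)%N))
  (hcv : forall j, (j < N - l)%N -> L2v P (v (l + j)%N)) :
  forall j, (j <= N - l)%N -> forall t,
    Aff lam (xs P l om E xi wc j t) (xs P l om E xi u j t) (xs P l om E xi v j t)
            (xs P l om (homog E) (fun _ => 0) dc j t).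
Proof.
elim=> [|j IH] hj t.
  exact: Aff_cst.
have hj' : (j <= N - l)%N by apply: ltnW.
have hx := IH hj'.
have hEx := Aff_Ev hx (hu j hj') (hv j hj').
have hc : forall t, Aff lam (wc (l + j)%N t) (u (l + j)%N t) (v (l + j)%N t) (dc (l + j)%N t).
  by move=> s; split.
have hEc := Aff_Ev hc (hcu j hj) (hcv j hj).
simpl.
repeat first [apply: Aff_add | apply: Aff_scale | apply: Aff_mul | apply: Aff_cst
             | exact: hx | exact: hEx | exact: hc | exact: hEc].
Qed.

End S4.


Section S5.
Context (R : realType) (d : measure_display) (T : measurableType d) (P : probability T R).
Context (n m N l : nat) (om : nat -> T -> R).

Definition integ (E : lqdata R T n m) (x : nat -> T -> 'cV[R]_n)
  (u : nat -> T -> 'cV[R]_m) (t : T) : R :=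
    dot (cG E *m x N t) (x N t) + 2 * dot (cg E t) (x N t)
    + dot (cGb E *m Ev P (x N)) (Ev P (x N)) + 2 * dot (cgb E t) (Ev P (x N))
    + \sum_(l <= k < N)
        ( dot (cQ E k *m x k t) (x k t) + 2 * dot (cS E k *m u k t) (x k t)
        + dot (cR E k *m u k t) (u k t) + 2 * dot (cq E k t) (x k t)
        + 2 * dot (crho E k t) (u k t)
        + dot (cQb E k *m Ev P (x k)) (Ev P (x k))
        + 2 * dot (cSb E k *m Ev P (u k)) (Ev P (x k))
        + dot (cRb E k *m Ev P (u k)) (Ev P (u k))
        + 2 * dot (cqb E k t) (Ev P (x k)) + 2 * dot (crhob E k t) (Ev P (u k))).

Lemma cost_integ E xi u :
  cost P N l om E xi u = Ex P (integ E (state P l om E xi u) u).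
Proof. by []. Qed.

Lemma QA_integ lam E (xw xu xv xd : nat -> T -> 'cV[R]_n)
  (w u v dd : nat -> T -> 'cV[R]_m)
  (hx : forall k, (l <= k <= N)%N -> forall t, Aff lam (xw k t) (xu k t) (xv k t) (xd k t))
  (hEx : forall k, (l <= k <= N)%N ->
     Aff lam (Ev P (xw k)) (Ev P (xu k)) (Ev P (xv k)) (Ev P (xd k)))
  (hc : forall k, (l <= k < N)%N -> forall t, Aff lam (w k t) (u k t) (v k t) (dd k t))
  (hEc : forall k, (l <= k < N)%N ->
     Aff lam (Ev P (w k)) (Ev P (u k)) (Ev P (v k)) (Ev P (dd k)))
  (hlN : (l <= N)%N) :
  forall t, QA lam (integ E xw w t) (integ E xu u t) (integ E xv v t)
                   (integ (homog E) xd dd t).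
Proof.
move=> t; rewrite /integ; apply: QA_add.
  have hN : (l <= N <= N)%N by rewrite hlN leqnn.
  have hxN := hx N hN t; have hExN := hEx N hN.
  repeat first [apply: QA_add | apply: QA_scale | apply: QA_dot | apply: Aff_mul
               | exact: hxN | exact: hExN | apply: Aff_cst].
apply: QA_sum => k; rewrite mem_index_iota => hk.
have hk' : (l <= k <= N)%N by case/andP: hk => -> /ltnW.
have hxk := hx k hk' t; have hExk := hEx k hk'.
have hck := hc k hk t; have hEck := hEc k hk.
repeat first [apply: QA_add | apply: QA_scale | apply: QA_dot | apply: Aff_mul
             | exact: hxk | exact: hExk | exact: hck | exact: hEck | apply: Aff_cst].
Qed.

Lemma L1_integ E (x : nat -> T -> 'cV[R]_n) (u : nat -> T -> 'cV[R]_m)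
  (hx : forall k, (l <= k <= N)%N -> L2v P (x k))
  (hu : forall k, (l <= k < N)%N -> L2v P (u k))
  (hg : L2v P (cg E)) (hgb : L2v P (cgb E))
  (hq : forall k, (l <= k < N)%N -> L2v P (cq E k) /\ L2v P (cqb E k) /\
                                   L2v P (crho E k) /\ L2v P (crhob E k))
  (hlN : (l <= N)%N) :
  L1 P (integ E x u).
Proof.
rewrite /integ; apply: L1_add.
  have hN : (l <= N <= N)%N by rewrite hlN leqnn.
  have hxN := hx N hN.
  repeat first [apply: L1_add | apply: L1_scale | apply: dot_L1 | apply: L2v_cst
               | apply: L2v_mul | exact: hxN | exact: hg | exact: hgb].
apply: L1_summ => k; rewrite mem_index_iota => hk.
have hk' : (l <= k <= N)%N by case/andP: hk => -> /ltnW.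
have hxk := hx k hk'; have huk := hu k hk.
have [hq1 [hq2 [hq3 hq4]]] := hq k hk.
repeat first [apply: L1_add | apply: L1_scale | apply: dot_L1 | apply: L2v_cst
             | apply: L2v_mul | exact: hxk | exact: huk | exact: hq1 | exact: hq2
             | exact: hq3 | exact: hq4].
Qed.

End S5.


Section S6.
Context (R : realType) (d : measure_display) (T : measurableType d) (P : probability T R).
Context (n m N l : nat) (om : nat -> T -> R) (xi0 : T -> 'cV[R]_n).

Lemma L2v_ext k (X Y : T -> 'cV[R]_k) : (forall t, X t = Y t) -> L2v P X -> L2v P Y.
Proof. by move=> h; have -> : Y = X by apply/funext => t; rewrite h. Qed.

Lemma L2v_sub k (X Y : T -> 'cV[R]_k) : L2v P X -> L2v P Y -> L2v P (fun t => X t - Y t).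
Proof.
move=> hX hY; apply: (L2v_ext (X := fun t => 1 *: X t + (-1) *: Y t)).
  by move=> t; rewrite scale1r scaleN1r.
exact: L2v_lin.
Qed.

Lemma adm_dc (u v : nat -> T -> 'cV[R]_m) : admissible P N l om xi0 u -> admissible P N l om xi0 v ->
  admissible P N l om xi0 (dc u v).
Proof.
move=> hu hv k hk; have [fu su] := hu k hk; have [fv sv] := hv k hk; split.
  move=> i; rewrite /dc.
  have -> : (fun t => (u k t - v k t) i 0) = (fun t => u k t i 0 - v k t i 0).
    by apply/funext => t; rewrite !mxE.
  exact: Fmeas_sub.
exact: (L2v_sub su sv).
Qed.

Lemma adm0 : admissible P N l om xi0 (fun _ _ => 0 : 'cV[R]_m).
Proof.
move=> k hk; split; last exact: (L2v_cst P 0).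
move=> i; have -> : (fun t : T => (0 : 'cV[R]_m) i 0) = (fun _ => 0).
  by apply/funext => t; rewrite mxE.
exact: Fmeas_cst.
Qed.

Lemma cost_identity lam (E : lqdata R T n m)
  (hwp : wellposed P N l om E xi0)
  (hg : L2v P (cg E)) (hgb : L2v P (cgb E))
  (hq : forall k, (l <= k < N)%N -> L2v P (cq E k) /\ L2v P (cqb E k) /\
                                   L2v P (crho E k) /\ L2v P (crhob E k))
  (hlN : (l <= N)%N)
  xi (hxi : init_state P om l N xi) u v
  (hu : admissible P N l om xi0 u) (hv : admissible P N l om xi0 v) :
  cost P N l om E xi (wc lam u v) =
  lam * cost P N l om E xi u + (1 - lam) * cost P N l om E xi v
  - lam * (1 - lam) * cost P N l om (homog E) (fun _ => 0) (dc u v).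
Proof.
have hxu : forall k, (l <= k <= N)%N -> L2v P (state P l om E xi u k).
  by move=> k hk; exact: (hwp xi u hxi hu k hk).
have hxv : forall k, (l <= k <= N)%N -> L2v P (state P l om E xi v k).
  by move=> k hk; exact: (hwp xi v hxi hv k hk).
have hcu : forall k, (l <= k < N)%N -> L2v P (u k) by move=> k hk; case: (hu k hk).
have hcv : forall k, (l <= k < N)%N -> L2v P (v k) by move=> k hk; case: (hv k hk).
have hA := @xs_aff R d T P lam n m N l om E xi u v.
have hA' : forall j, (j <= N - l)%N -> forall t,
    Aff lam (xs P l om E xi (wc lam u v) j t) (xs P l om E xi u j t)
      (xs P l om E xi v j t) (xs P l om (homog E) (fun _ => 0) (dc u v) j t).
  apply: hA.
  - move=> j hj; have := hxu (l + j)%N; rewrite /state addKn; apply; lia.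
  - move=> j hj; have := hxv (l + j)%N; rewrite /state addKn; apply; lia.
  - move=> j hj; apply: hcu; lia.
  - move=> j hj; apply: hcv; lia.
have hx : forall k, (l <= k <= N)%N -> forall t,
    Aff lam (state P l om E xi (wc lam u v) k t) (state P l om E xi u k t)
      (state P l om E xi v k t) (state P l om (homog E) (fun _ => 0) (dc u v) k t).
  by move=> k hk t; apply: hA'; lia.
have hEx : forall k, (l <= k <= N)%N ->
    Aff lam (Ev P (state P l om E xi (wc lam u v) k)) (Ev P (state P l om E xi u k))
      (Ev P (state P l om E xi v k)) (Ev P (state P l om (homog E) (fun _ => 0) (dc u v) k)).
  by move=> k hk; apply: Aff_Ev; [exact: hx | exact: hxu | exact: hxv].
have hc : forall k, (l <= k < N)%N -> forall t,
    Aff lam (wc lam u v k t) (u k t) (v k t) (dc u v k t) by [].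
have hEc : forall k, (l <= k < N)%N ->
    Aff lam (Ev P (wc lam u v k)) (Ev P (u k)) (Ev P (v k)) (Ev P (dc u v k)).
  by move=> k hk; apply: Aff_Ev; [exact: hc | exact: hcu | exact: hcv].
have hQ := QA_integ E hx hEx hc hEc hlN.
have hxd : forall k, (l <= k <= N)%N ->
    L2v P (state P l om (homog E) (fun _ => 0) (dc u v) k).
  move=> k hk; apply: (L2v_ext (X := fun t => state P l om E xi u k t - state P l om E xi v k t)).
    by move=> t; case: (hx k hk t).
  exact: L2v_sub (hxu k hk) (hxv k hk).
have hcd : forall k, (l <= k < N)%N -> L2v P (dc u v k).
  by move=> k hk; exact: L2v_sub (hcu k hk) (hcv k hk).
have I1 := L1_integ hxu hcu hg hgb hq hlN.
have I2 := L1_integ hxv hcv hg hgb hq hlN.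
have I3 := @L1_integ R d T P n m N l (homog E) _ _ hxd hcd (L2v_cst P 0) (L2v_cst P 0)
  (fun k _ => conj (L2v_cst P 0) (conj (L2v_cst P 0) (conj (L2v_cst P 0) (L2v_cst P 0)))) hlN.
rewrite !cost_integ.
have -> : integ P N l E (state P l om E xi (wc lam u v)) (wc lam u v) =
  fun t => lam * integ P N l E (state P l om E xi u) u t
         + (1 - lam) * integ P N l E (state P l om E xi v) v t
         + (- (lam * (1 - lam))) * integ P N l (homog E)
               (state P l om (homog E) (fun _ => 0) (dc u v)) (dc u v) t.
  by apply/funext => t; move: (hQ t); rewrite /QA => ->; rewrite mulNr.
by rewrite Ex_lin3 // mulNr.
Qed.

End S6.


Lemma half_pos (R : realType) : (0 : R) < 1 / 2 * (1 - 1 / 2).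
Proof. lra. Qed.
Lemma half_in (R : realType) : 0 <= (1 / 2 : R) <= 1.
Proof. by apply/andP; split; lra. Qed.

Section S7.
Context (R : realType) (d : measure_display) (T : measurableType d) (P : probability T R).
Context (n m N l : nat) (om : nat -> T -> R) (xi0 : T -> 'cV[R]_n).

Lemma key1 (E : lqdata R T n m)
  (hwp : wellposed P N l om E xi0)
  (hg : L2v P (cg E)) (hgb : L2v P (cgb E))
  (hq : forall k, (l <= k < N)%N -> L2v P (cq E k) /\ L2v P (cqb E k) /\
                                   L2v P (crho E k) /\ L2v P (crhob E k))
  (hlN : (l <= N)%N)
  (H : forall u, admissible P N l om xi0 u -> 0 <= cost P N l om (homog E) (fun _ => 0) u) :
  forall xi, init_state P om l N xi ->
    convex_on_U (admissible P N l om xi0) (cost P N l om E xi).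
Proof.
move=> xi hxi u v hu hv lam /andP[h0 h1].
have := cost_identity lam hwp hg hgb hq hlN hxi hu hv; rewrite /wc => ->.
have hJ := H _ (adm_dc hu hv).
rewrite gerBl.
by apply: mulr_ge0 => //; apply: mulr_ge0 => //; rewrite subr_ge0.
Qed.

Lemma key2 (E : lqdata R T n m)
  (hwp : wellposed P N l om E xi0)
  (hg : L2v P (cg E)) (hgb : L2v P (cgb E))
  (hq : forall k, (l <= k < N)%N -> L2v P (cq E k) /\ L2v P (cqb E k) /\
                                   L2v P (crho E k) /\ L2v P (crhob E k))
  (hlN : (l <= N)%N) :
  (exists xi, init_state P om l N xi /\
    convex_on_U (admissible P N l om xi0) (cost P N l om E xi)) ->
  forall u, admissible P N l om xi0 u -> 0 <= cost P N l om (homog E) (fun _ => 0) u.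
Proof.
move=> [xi [hxi hconv]] u hu.
have h0 : admissible P N l om xi0 (fun _ _ => 0 : 'cV[R]_m) by apply: adm0.
have hh := half_in R.
have hc := hconv u _ hu h0 (1 / 2) hh.
have := cost_identity (1 / 2) hwp hg hgb hq hlN hxi hu h0; rewrite /wc.
have -> : dc u (fun _ _ => 0) = u by apply/funext => k; apply/funext => t; rewrite /dc subr0.
move=> eq; rewrite eq in hc.
have hp := half_pos R.
by move: hc; rewrite gerBl pmulr_rge0.
Qed.

End S7.

Unset Implicit Arguments. Set Strict Implicit.

Theorem corollary3p1
  (R : realType) (d : measure_display) (T : measurableType d) (P : probability T R)
  (N n m l : nat) (om : nat -> T -> R) (xi0 : T -> 'cV[R]_n)
  (D : lqdata R T n m)
  (M : (nat -> T -> 'cV[R]_m) -> (nat -> T -> 'cV[R]_m))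
  (* dimensions and initial time l in N_0 = {0, ..., N-1} *)
  (hN : (1 <= N)%N) (hn : (1 <= n)%N) (hm : (1 <= m)%N) (hl : (l < N)%N)
  (* the noise: real random variables omega_l, ..., omega_{N-1} *)
  (hom : forall k, (l <= k < N)%N -> measurable_fun setT (om k))
  (* xi0 : the initial state generating the filtration F_k = sigma{xi0, omega_l..omega_k} *)
  (hxi0 : init_state P om l N xi0)
  (* E[omega_{k+1} | F_k] = 0 and E[omega_{k+1}^2 | F_k] = 1 *)
  (hmart : forall k, (l <= k)%N -> (k.+1 < N)%N ->
     is_condexp P (filt xi0 om l k) (om k.+1) (fun _ => 0) /\
     is_condexp P (filt xi0 om l k) (fun t => om k.+1 t ^+ 2) (fun _ => 1))
  (* symmetry of the weighting matrices *)
  (hsym : forall k, (k < N)%N ->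
     (cQ D k)^T = cQ D k /\ (cQb D k)^T = cQb D k /\
     (cR D k)^T = cR D k /\ (cRb D k)^T = cRb D k)
  (hG : (cG D)^T = cG D) (hGb : (cGb D)^T = cGb D)
  (* square-integrable random g, gbar; adapted (square-integrable) q, qbar, rho, rhobar *)
  (hg : sqintv P (cg D)) (hgb : sqintv P (cgb D))
  (hq : forall k, (l <= k < N)%N ->
     Fmeasv (filt xi0 om l k) (cq D k) /\ sqintv P (cq D k) /\
     Fmeasv (filt xi0 om l k) (cqb D k) /\ sqintv P (cqb D k) /\
     Fmeasv (filt xi0 om l k) (crho D k) /\ sqintv P (crho D k) /\
     Fmeasv (filt xi0 om l k) (crhob D k) /\ sqintv P (crhob D k))
  (* the state equation is well posed in L^2 *)
  (hwp : wellposed P N l om D xi0) (hwp0 : wellposed P N l om (homog D) xi0)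
  (* M : the bounded self-adjoint linear operator on U_ad with J^0(l,0;u) = <M u, u> *)
  (hMU : forall u, admissible P N l om xi0 u -> admissible P N l om xi0 (M u))
  (hMlin : forall (a : R) u v w, admissible P N l om xi0 u -> admissible P N l om xi0 v ->
     admissible P N l om xi0 w ->
     ipU P N l (M (fun k t => a *: u k t + v k t)) w
       = a * ipU P N l (M u) w + ipU P N l (M v) w)
  (hMsa : forall u v, admissible P N l om xi0 u -> admissible P N l om xi0 v ->
     ipU P N l (M u) v = ipU P N l u (M v))
  (hMbd : exists C : R, forall u, admissible P N l om xi0 u ->
     ipU P N l (M u) (M u) <= C * ipU P N l u u)
  (hMJ : forall u, admissible P N l om xi0 u ->
     cost P N l om (homog D) (fun _ => 0) u = ipU P N l (M u) u) :
  [<-> (* (i) *)  forall u, admissible P N l om xi0 u ->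
                    0 <= cost P N l om (homog D) (fun _ => 0) u;
       (* (ii) *) exists xi, init_state P om l N xi /\
                    convex_on_U (admissible P N l om xi0) (cost P N l om D xi);
       (* (iii) *) forall xi, init_state P om l N xi ->
                    convex_on_U (admissible P N l om xi0) (cost P N l om D xi);
       (* (iv) *) exists xi, init_state P om l N xi /\
                    convex_on_U (admissible P N l om xi0) (cost P N l om (homog D) xi);
       (* (v) *)  forall xi, init_state P om l N xi ->
                    convex_on_U (admissible P N l om xi0) (cost P N l om (homog D) xi);
       (* (vi) *) forall u, admissible P N l om xi0 u -> 0 <= ipU P N l (M u) u].
Proof.
have hlN : (l <= N)%N by apply: ltnW.
have hqD : forall k, (l <= k < N)%N -> L2v P (cq D k) /\ L2v P (cqb D k) /\
                                   L2v P (crho D k) /\ L2v P (crhob D k).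
  by move=> k hk; case: (hq k hk) => _ [? [_ [? [_ [? [_ ?]]]]]].
have hq0 : forall k, (l <= k < N)%N -> L2v P (cq (homog D) k) /\ L2v P (cqb (homog D) k) /\
                                   L2v P (crho (homog D) k) /\ L2v P (crhob (homog D) k).
  by move=> k hk; split; [|split; [|split]]; exact: (L2v_cst P 0).
have hg0 : L2v P (cg (homog D)) by exact: (L2v_cst P 0).
have k1D := key1 hwp hg hgb hqD hlN.
have k2D := key2 hwp hg hgb hqD hlN.
have k10 := key1 hwp0 hg0 hg0 hq0 hlN.
have k20 := key2 hwp0 hg0 hg0 hq0 hlN.
tfae.
- move=> hi; exists xi0; split; [exact: hxi0 | exact: k1D].
- move=> hii; apply: k1D. exact: (k2D hii).
- move=> hiii; exists xi0; split; [exact: hxi0 | apply: (k10 _ xi0 hxi0) => u hu].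
  have h : exists xi, init_state P om l N xi /\
    convex_on_U (admissible P N l om xi0) (cost P N l om D xi).
    by exists xi0; split; [exact: hxi0 | exact: hiii].
  exact: (k2D h u hu).
- by move=> hiv; apply: k10; exact: k20.
- move=> hv u hu; rewrite -hMJ //.
  have h : exists xi, init_state P om l N xi /\
    convex_on_U (admissible P N l om xi0) (cost P N l om (homog D) xi).
    by exists xi0; split; [exact: hxi0 | exact: hv].
  exact: (k20 h u hu).
- by move=> hvi u hu; rewrite hMJ //; exact: hvi.
Qed.
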